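(* Let $1 \le R < P$ be integers and let $\mathcal{S}_{P,R}^+$ be the set of $P\times P$ real symmetric positive semi-definite matrices of rank exactly $R$, equipped with the topology induced from $\mathbb{R}^{P\times P}$. There is no distance (metric) $d : \mathcal{S}_{P,R}^+\times\mathcal{S}_{P,R}^+\to[0,\infty)$ that is continuous and satisfies the affine invariance property $$d(\bm{W}^{\top}\bm{S}\bm{W},\ \bm{W}^{\top}\bm{S}'\bm{W}) = d(\bm{S},\bm{S}')\quad\text{for all } \bm{S},\bm{S}'\in\mathcal{S}_{P,R}^+ \text{ and all invertible } \bm{W}\in\mathbb{R}^{P\times P}.$$
   Context: Note that for invertible $\bm{W}$ and $\bm{S}\in\mathcal{S}_{P,R}^+$, one has $\bm{W}^{\top}\bm{S}\bm{W}\in\mathcal{S}_{P,R}^+$, so the invariance condition is well posed. *)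

(* Defs.v *)
From HB Require Import structures.
From mathcomp Require Import all_boot all_order all_algebra.
Set Implicit Arguments. Unset Strict Implicit. Unset Printing Implicit Defensive.
Import Order.TTheory GRing.Theory Num.Theory.
Local Open Scope ring_scope.

Definition psd_rank (F : realFieldType) (P r : nat) (S : 'M[F]_P) : Prop :=
  S^T = S /\ (forall v : 'rV[F]_P, 0 <= (v *m S *m v^T) 0 0) /\ \rank S = r.

Definition is_metric_on (F : realFieldType) (P : nat) (A : 'M[F]_P -> Prop)
    (d : 'M[F]_P -> 'M[F]_P -> F) : Prop :=
  (forall S S', A S -> A S' -> 0 <= d S S') /\
  (forall S S', A S -> A S' -> (d S S' = 0 <-> S = S')) /\
  (forall S S', A S -> A S' -> d S S' = d S' S) /\
  (forall S S' S'', A S -> A S' -> A S'' -> d S S'' <= d S S' + d S' S'').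

(* Entrywise closeness: the (max-norm) topology induced from F^(P x P). *)
Definition mx_close (F : realFieldType) (P : nat) (delta : F) (A B : 'M[F]_P) : Prop :=
  forall i j, `|A i j - B i j| < delta.

Definition continuous_on2 (F : realFieldType) (P : nat) (A : 'M[F]_P -> Prop)
    (d : 'M[F]_P -> 'M[F]_P -> F) : Prop :=
  forall S S', A S -> A S' -> forall eps : F, 0 < eps ->
    exists2 delta : F, 0 < delta &
      forall T T', A T -> A T' -> mx_close delta S T -> mx_close delta S' T' ->
        `|d S S' - d T T'| < eps.

Definition affine_invariant (F : realFieldType) (P : nat) (A : 'M[F]_P -> Prop)
    (d : 'M[F]_P -> 'M[F]_P -> F) : Prop :=
  forall (S S' W : 'M[F]_P), A S -> A S' -> W \in unitmx ->
    d (W^T *m S *m W) (W^T *m S' *m W) = d S S'.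

(* Main.v *)
Require Import Defs.
From HB Require Import structures.
From mathcomp Require Import all_boot all_order all_algebra.
From mathcomp Require Import ring lra.
Import Order.TTheory GRing.Theory Num.Theory.
Local Open Scope ring_scope.

Section H.
Variable F : realFieldType.
Variable n : nat.

Lemma pidE_l (r : nat) (a b : 'I_n) :
  (pid_mx r : 'M[F]_n) *m delta_mx a b = (a < r)%:R *: delta_mx a b.
Proof.
apply/matrixP=> i j; rewrite !mxE (bigD1 a) //= big1 ?addr0.
  rewrite !mxE eqxx /=; case: (i =P a) => [->|/eqP ne]; rewrite ?eqxx /=.
    by case: (a < r)%N; case: (j == b); rewrite /= ?mul1r ?mulr1 ?mul0r ?mulr0.
  have -> : (i == a :> nat) = false by apply/negbTE; rewrite -(inj_eq val_inj) in ne.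
  by rewrite /= !mul0r mulr0.
by move=> k /negbTE nk; rewrite !mxE nk /= mulr0.
Qed.

Lemma pidE_r (r : nat) (a b : 'I_n) :
  delta_mx a b *m (pid_mx r : 'M[F]_n) = (b < r)%:R *: delta_mx a b.
Proof.
apply: trmx_inj; rewrite trmx_mul tr_pid_mx !trmx_delta linearZ /= trmx_delta.
exact: pidE_l.
Qed.

Lemma psd_congr (r : nat) (X W : 'M[F]_n) :
  psd_rank r X -> W \in unitmx -> psd_rank r (W^T *m X *m W).
Proof.
move=> [sX [pX rX]] uW; split; [|split].
- by rewrite !trmx_mul trmxK sX mulmxA.
- move=> v; have := pX (v *m W^T); rewrite trmx_mul trmxK.
  by rewrite !mulmxA.
- rewrite mxrankMfree ?row_free_unit // -mxrank_tr trmx_mul trmxK.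
  by rewrite mxrankMfree ?row_free_unit ?unitmx_tr // mxrank_tr.
Qed.

Lemma psd_pid (r : nat) : (r <= n)%N -> psd_rank r (pid_mx r : 'M[F]_n).
Proof.
move=> rn; split; [exact: tr_pid_mx|split; last by rewrite rank_pid_mx].
move=> v; have h : (pid_mx r : 'M[F]_n) = (pid_mx r : 'M[F]_n)^T *m (pid_mx r : 'M[F]_n).
  by rewrite tr_pid_mx pid_mx_id.
have -> : v *m pid_mx r *m v^T = (v *m (pid_mx r : 'M[F]_n)^T) *m (v *m (pid_mx r : 'M[F]_n)^T)^T.
  by rewrite trmx_mul trmxK mulmxA -(mulmxA v (pid_mx r : 'M[F]_n)^T) -h.
rewrite mxE; apply: sumr_ge0 => k _.
by rewrite [X in _ * X]mxE -expr2 sqr_ge0.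
Qed.
End H.

Theorem mainTheorem4 (F : realFieldType) (P r : nat) :
  (1 <= r)%N -> (r < P)%N ->
  ~ exists d : 'M[F]_P -> 'M[F]_P -> F,
      [/\ is_metric_on (@psd_rank F P r) d,
          continuous_on2 (@psd_rank F P r) d &
          affine_invariant (@psd_rank F P r) d].
Proof.
move=> r1 rP [d [[d0 [deq [dsym dtri]]] dcont daff]].
have P0 : (0 < P)%N by apply: leq_ltn_trans rP.
pose e : 'I_P := Ordinal P0. pose f : 'I_P := Ordinal rP.
have ef : e != f by rewrite -(inj_eq val_inj) /= eq_sym -lt0n.
have fe : f != e by rewrite eq_sym.
pose S : 'M[F]_P := pid_mx r.
have AS : psd_rank r S by apply: psd_pid; apply: ltnW.
pose E (a b : 'I_P) : 'M[F]_P := delta_mx a b.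
have Se : S *m E e f = E e f by rewrite /S /E pidE_l /= r1 scale1r.
have Sf : S *m E f f = 0 by rewrite /S /E pidE_l /= ltnn scale0r.
have eS : E f e *m S = E f e by rewrite /S /E pidE_r /= r1 scale1r.
have fS : E f f *m S = 0 by rewrite /S /E pidE_r /= ltnn scale0r.
have EE a b c : E a b *m E b c = E a c by exact: mul_delta_mx.
have EE0 a b c g : b != c -> E a b *m E c g = 0 by move=> h; exact: mul_delta_mx_0.
pose U : 'M[F]_P := 1%:M + E e f.
have uU : U \in unitmx.
  have h : U *m (1%:M - E e f) = 1%:M.
    by rewrite /U mulmxDl !mulmxBr !mul1mx ?mulmx1 EE0 // subr0 subrK.
  by case: (mulmx1_unit h).
pose M1 := U^T *m S *m U.
have AM1 : psd_rank r M1 by apply: psd_congr.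
have M1E : M1 = S + E f e + E e f + E f f.
  rewrite /M1 /U [(1%:M + _)^T]linearD /= trmx1 /E trmx_delta -/(E f e) -/(E e f).
  by rewrite mulmxDr mulmx1 !mulmxDl !mul1mx eS Se EE addrA.
have SM1 : S != M1.
  apply/negP=> /eqP /matrixP /(_ e f); rewrite M1E !mxE (negbTE ef) (negbTE fe) eqxx /=.
  set x := ((e == f) && _)%:R; rewrite ?mulr0n ?mulr1n ?addr0 eqxx.
  move=> h; have := congr1 (fun z => z - x) h; rewrite subrr [x + _]addrC addrK /=.
  by move/eqP; rewrite eq_sym oner_eq0.
have dpos : 0 < d S M1.
  rewrite lt_def d0 // andbT; apply/negP => /eqP h.
  by move: SM1; rewrite (proj1 (deq _ _ AS AM1) h) eqxx.
pose Mt t := S + t *: E f e + t *: E e f + t ^+ 2 *: E f f.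
have key t : 0 < t -> psd_rank r (Mt t) /\ d S (Mt t) = d S M1.
  move=> t0; pose c := t - 1; pose V : 'M[F]_P := 1%:M + c *: E f f.
  have uV : V \in unitmx.
    have h : V *m (1%:M + (t^-1 - 1) *: E f f) = 1%:M.
      rewrite /V mulmxDl !mulmxDr !mul1mx mulmx1 -scalemxAl -scalemxAr EE scalerA.
      rewrite -addrA -!scalerDl.
      have -> : t^-1 - 1 + (c + c * (t^-1 - 1)) = 0.
        rewrite /c; field; by rewrite gt_eqF.
      by rewrite scale0r addr0.
    by case: (mulmx1_unit h).
  have VT : V^T = V by rewrite /V [(1%:M + _)^T]linearD /= trmx1 [(_ *: _)^T]linearZ /= trmx_delta.
  have VSV : V^T *m S *m V = S.
    rewrite VT /V mulmxDl mul1mx -scalemxAl fS scaler0 addr0.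
    by rewrite mulmxDr mulmx1 -scalemxAr Sf scaler0 addr0.
  have VMV : V^T *m M1 *m V = Mt t.
    have L1 : E f f *m (S + E f e + E e f + E f f) = E f e + E f f.
      by rewrite !mulmxDr fS EE (EE0 _ _ _ _ fe) EE add0r addr0.
    have L2 : (S + E f e + E e f + E f f + c *: (E f e + E f f)) *m E f f
              = E e f + E f f + c *: E f f.
      rewrite !mulmxDl Sf (EE0 _ _ _ _ ef) EE EE -scalemxAl mulmxDl (EE0 _ _ _ _ ef) EE.
      by rewrite !add0r.
    rewrite VT M1E /V mulmxDl mul1mx -scalemxAl L1 mulmxDr mulmx1 -scalemxAr L2.
    apply/matrixP => i j; rewrite /Mt !mxE /c; ring.
  split; first by rewrite -VMV; apply: psd_congr.
  by rewrite -VMV -{1}VSV daff.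
have [del del0 hdel] := dcont S S AS AS (d S M1) dpos.
pose t := del / (del + 4).
have t0 : 0 < t by rewrite divr_gt0 // ltr_wpDl // ltW.
have [At dt] := key t t0.
have := hdel S (Mt t) AS At.
have cS : mx_close del S S by move=> i j; rewrite subrr normr0.
have cM : mx_close del S (Mt t).
  move=> i j; rewrite /Mt !mxE.
  have td : t * (del + 4) = del by rewrite /t mulfVK // gt_eqF // ltr_wpDl // ltW.
  have t1 : t <= 1.
    by rewrite /t ler_pdivrMr ?mul1r ?ler_wpDr // ltr_wpDl // ltW.
  have hb (b : bool) : 0 <= (b%:R : F) <= 1 by case: b; rewrite /= ?lexx ?ler01.
  have H (s x y z : F) : 0 <= x <= 1 -> 0 <= y <= 1 -> 0 <= z <= 1 ->
      `|s - (s + t * x + t * y + t ^+ 2 * z)| < del.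
    move=> /andP[x0 x1] /andP[y0 y1] /andP[z0 z1].
    rewrite (_ : s - _ = - (t * x + t * y + t ^+ 2 * z)); last by ring.
    rewrite normrN ger0_norm; last by rewrite expr2; nra.
    rewrite expr2; nra.
  by apply: H; apply: hb.
move=> /(_ cS cM); rewrite dt (proj2 (deq _ _ AS AS) erefl) sub0r normrN.
by rewrite gtr0_norm // ltxx.
Qed.
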